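(* Let $A,B$ be rings with local units and $f:A\to B$ a ring homomorphism. The following are equivalent: (1) $f$ is non-degenerate; (2) $f$ extends to a strictly continuous unital ring homomorphism $\varphi:M(A)\to M(B)$ (i.e. $\varphi\circ\mu_A=\mu_B\circ f$). Furthermore, in this case there exists a unique ring homomorphism $M(A)\to M(B)$ extending $f$.
   Context: Rings are associative, not necessarily unital. A ring $A$ has local units if for every $a\in A$ there exist $e,e'\in A$ with $ae=e'a=a$. The multiplier ring $M(A)$ of such $A$ consists of pairs $m=(L,R)$ of additive maps $A\to A$, written $L(a)=ma$, $R(a)=am$, satisfying $m(ab)=(ma)b$, $(ab)m=a(bm)$ and $a(mb)=(am)b$ for all $a,b\in A$; addition is pointwise and multiplication is composition of these actions, making $M(A)$ a unital ring. The map $\mu_A:A\to M(A)$ sending $\xi$ to left and right multiplication by $\xi$ is an injective ring homomorphism identifying $A$ with an ideal of $M(A)$. The strict topology on $M(A)$ is the weakest topology making the maps $m\mapsto ma$ and $m\mapsto am$ continuous for each $a\in A$, where $A$ carries the discrete topology. For subrings $X,Y$ of a ring, $XY$ denotes the additive subgroup generated by products $xy$. A ring homomorphism $f:A\to B$ between rings with local units is non-degenerate if $f(A)B=Bf(A)=B$. *)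

(* Defs.v *)
From HB Require Import structures.
From mathcomp Require Import all_boot all_order all_algebra.
Set Implicit Arguments. Unset Strict Implicit. Unset Printing Implicit Defensive.
Import GRing.Theory.
Local Open Scope ring_scope.

Record nuRing := NuRing {
  nu_car :> zmodType;
  nmul : nu_car -> nu_car -> nu_car;
  nmulA : forall x y z, nmul x (nmul y z) = nmul (nmul x y) z;
  nmulDl : forall x y z, nmul (x + y) z = nmul x z + nmul y z;
  nmulDr : forall x y z, nmul x (y + z) = nmul x y + nmul x z
}.

Notation "x ** y" := (nmul x y) (at level 40, left associativity).

Definition has_local_units (A : nuRing) : Prop :=
  forall a : A, exists e e' : A, a ** e = a /\ e' ** a = a.

Definition nu_rhom (A B : nuRing) (f : A -> B) : Prop :=
  (forall x y, f (x + y) = f x + f y) /\ (forall x y, f (x ** y) = f x ** f y).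

(* Non-degeneracy: f(A)B = B f(A) = B, where XY is the additive subgroup
   generated by the products; it consists of the finite sums of products. *)
Definition nondegenerate_hom (A B : nuRing) (f : A -> B) : Prop :=
  (forall b : B, exists s : seq (A * B), b = \sum_(p <- s) (f p.1 ** p.2)) /\
  (forall b : B, exists s : seq (B * A), b = \sum_(p <- s) (p.1 ** f p.2)).

(* Multipliers: pairs (L,R) of additive maps with L a = m a, R a = a m. *)
Record multiplier (A : nuRing) := Multiplier {
  mL : A -> A;
  mR : A -> A;
  mL_add : forall x y, mL (x + y) = mL x + mL y;
  mR_add : forall x y, mR (x + y) = mR x + mR y;
  mL_mul : forall a b, mL (a ** b) = mL a ** b;
  mR_mul : forall a b, mR (a ** b) = a ** mR b;
  mLR : forall a b, a ** mL b = mR a ** b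
}.

Section MultOps.
Variable A : nuRing.

Definition madd (m n : multiplier A) : multiplier A.
Proof.
refine (@Multiplier A (fun a => mL m a + mL n a) (fun a => mR m a + mR n a)
  _ _ _ _ _).
- by move=> x y; rewrite !mL_add addrACA.
- by move=> x y; rewrite !mR_add addrACA.
- by move=> a b; rewrite nmulDl !mL_mul.
- by move=> a b; rewrite nmulDr !mR_mul.
- by move=> a b; rewrite nmulDr nmulDl !mLR.
Defined.

Definition mmul (m n : multiplier A) : multiplier A.
Proof.
refine (@Multiplier A (fun a => mL m (mL n a)) (fun a => mR n (mR m a))
  _ _ _ _ _).
- by move=> x y; rewrite !mL_add.
- by move=> x y; rewrite !mR_add.
- by move=> a b; rewrite !mL_mul.
- by move=> a b; rewrite !mR_mul.
- by move=> a b; rewrite mLR mLR.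
Defined.

Definition mone : multiplier A.
Proof.
refine (@Multiplier A (fun a => a) (fun a => a) _ _ _ _ _) => //.
Defined.

Definition mu (xi : A) : multiplier A.
Proof.
refine (@Multiplier A (fun a => xi ** a) (fun a => a ** xi) _ _ _ _ _).
- by move=> x y; rewrite nmulDr.
- by move=> x y; rewrite nmulDl.
- by move=> a b; rewrite nmulA.
- by move=> a b; rewrite nmulA.
- by move=> a b; rewrite nmulA.
Defined.

End MultOps.

Definition mult_rhom (A B : nuRing) (phi : multiplier A -> multiplier B) : Prop :=
  (forall m n, phi (madd m n) = madd (phi m) (phi n)) /\
  (forall m n, phi (mmul m n) = mmul (phi m) (phi n)).

Definition mult_unital (A B : nuRing) (phi : multiplier A -> multiplier B) : Prop :=
  phi (mone A) = mone B.

(* Strict continuity, A and B discrete.  The strict topology on M(A) has as a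
   neighbourhood base at m the sets
     { m' | m' a = m a and a m' = a m for all a in as },  as a finite list.
   Continuity of phi at every point, stated via these neighbourhood bases. *)
Definition strictly_continuous (A B : nuRing)
    (phi : multiplier A -> multiplier B) : Prop :=
  forall (m : multiplier A) (bs : seq B),
    exists as_ : seq A, forall m' : multiplier A,
      (forall a, a \in as_ -> mL m' a = mL m a /\ mR m' a = mR m a) ->
      forall b, b \in bs -> mL (phi m') b = mL (phi m) b /\
                            mR (phi m') b = mR (phi m) b.

Definition mult_extends (A B : nuRing) (f : A -> B)
    (phi : multiplier A -> multiplier B) : Prop :=
  forall a : A, phi (mu a) = mu (f a).

(* Main.v *)
Require Import Defs.
From mathcomp Require Import all_boot all_order all_algebra.
From Stdlib Require Import ProofIrrelevance FunctionalExtensionality ClassicalEpsilon.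
Set Implicit Arguments. Unset Strict Implicit. Unset Printing Implicit Defensive.
Import GRing.Theory.
Local Open Scope ring_scope.

Lemma add_0 (V W : zmodType) (g : V -> W) :
  (forall x y, g (x + y) = g x + g y) -> g 0 = 0.
Proof. move=> h; have := h 0 0; rewrite addr0 => e; apply: (addrI (g 0)); by rewrite -e addr0. Qed.

Lemma nmulr0 (A : nuRing) (x : A) : x ** 0 = 0.
Proof. exact: (add_0 (nmulDr x)). Qed.
Lemma nmul0r (A : nuRing) (x : A) : 0 ** x = 0.
Proof. exact: (add_0 (fun a b => nmulDl a b x)). Qed.
Lemma nmulrN (A : nuRing) (x y : A) : x ** (- y) = - (x ** y).
Proof. by apply/eqP; rewrite -subr_eq0 opprK -nmulDr addNr nmulr0. Qed.
Lemma nmulNr (A : nuRing) (x y : A) : (- x) ** y = - (x ** y).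
Proof. by apply/eqP; rewrite -subr_eq0 opprK -nmulDl addNr nmul0r. Qed.
Lemma nmulrB (A : nuRing) (x y z : A) : x ** (y - z) = x ** y - x ** z.
Proof. by rewrite nmulDr nmulrN. Qed.
Lemma nmulBl (A : nuRing) (x y z : A) : (x - y) ** z = x ** z - y ** z.
Proof. by rewrite nmulDl nmulNr. Qed.
Lemma nmul_sumr (A : nuRing) (I : Type) (x : A) (s : seq I) (F : I -> A) :
  x ** (\sum_(i <- s) F i) = \sum_(i <- s) x ** F i.
Proof. exact: (big_morph (fun y => x ** y) (nmulDr x) (nmulr0 x)). Qed.
Lemma nmul_suml (A : nuRing) (I : Type) (x : A) (s : seq I) (F : I -> A) :
  (\sum_(i <- s) F i) ** x = \sum_(i <- s) F i ** x.
Proof. exact: (big_morph (fun y => y ** x) (fun a b => nmulDl a b x) (nmul0r x)). Qed.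

Lemma mL0 (A : nuRing) (m : multiplier A) : mL m 0 = 0.
Proof. exact: (add_0 (mL_add m)). Qed.
Lemma mR0 (A : nuRing) (m : multiplier A) : mR m 0 = 0.
Proof. exact: (add_0 (mR_add m)). Qed.
Lemma mL_sum (A : nuRing) (I : Type) (m : multiplier A) (s : seq I) (F : I -> A) :
  mL m (\sum_(i <- s) F i) = \sum_(i <- s) mL m (F i).
Proof. exact: (big_morph (mL m) (mL_add m) (mL0 m)). Qed.
Lemma mR_sum (A : nuRing) (I : Type) (m : multiplier A) (s : seq I) (F : I -> A) :
  mR m (\sum_(i <- s) F i) = \sum_(i <- s) mR m (F i).
Proof. exact: (big_morph (mR m) (mR_add m) (mR0 m)). Qed.

Lemma meq (A : nuRing) (m n : multiplier A) : mL m = mL n -> mR m = mR n -> m = n.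
Proof.
case: m => L R a b c d e; case: n => L' R' a' b' c' d' e' /= EL ER.
subst L' R'; f_equal; apply: proof_irrelevance.
Qed.

Lemma f0 (A B : nuRing) (f : A -> B) : nu_rhom f -> f 0 = 0.
Proof. by case=> hD _; exact: (add_0 hD). Qed.
Lemma fN (A B : nuRing) (f : A -> B) : nu_rhom f -> forall x, f (- x) = - f x.
Proof. move=> hf x; apply/eqP; rewrite -subr_eq0 opprK -hf.1 addNr (f0 hf) //. Qed.

Lemma cancel_l (B : nuRing) (y y' : B) : has_local_units B ->
  (forall c : B, c ** y = c ** y') -> y = y'.
Proof.
move=> HB H; apply/eqP; rewrite -subr_eq0; apply/eqP.
have [_ [e' [_ He]]] := HB (y - y').
by rewrite -He nmulrB H subrr.
Qed.
Lemma cancel_r (B : nuRing) (y y' : B) : has_local_units B ->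
  (forall c : B, y ** c = y' ** c) -> y = y'.
Proof.
move=> HB H; apply/eqP; rewrite -subr_eq0; apply/eqP.
have [e [_ [He _]]] := HB (y - y').
by rewrite -He nmulBl H subrr.
Qed.

Definition SL (A B : nuRing) (f : A -> B) (s : seq (A * B)) : B :=
  \sum_(p <- s) (f p.1 ** p.2).
Definition SR (A B : nuRing) (f : A -> B) (s : seq (B * A)) : B :=
  \sum_(p <- s) (p.1 ** f p.2).
Definition DL (A B : nuRing) (f : A -> B) (m : multiplier A) (s : seq (A * B)) : B :=
  \sum_(p <- s) (f (mL m p.1) ** p.2).
Definition DR (A B : nuRing) (f : A -> B) (m : multiplier A) (s : seq (B * A)) : B :=
  \sum_(p <- s) (p.1 ** f (mR m p.2)).

Lemma keyL (A B : nuRing) (f : A -> B) (hf : nu_rhom f) m a s :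
  f a ** DL f m s = f (mR m a) ** SL f s.
Proof.
rewrite /DL /SL !nmul_sumr; apply: eq_bigr => p _.
by rewrite !nmulA -!hf.2 mLR.
Qed.
Lemma keyR (A B : nuRing) (f : A -> B) (hf : nu_rhom f) m a s :
  DR f m s ** f a = SR f s ** f (mL m a).
Proof.
rewrite /DR /SR !nmul_suml; apply: eq_bigr => p _.
by rewrite -!nmulA -!hf.2 mLR.
Qed.

Lemma wdL (A B : nuRing) (f : A -> B) (hf : nu_rhom f) (HB : has_local_units B)
  (nd : nondegenerate_hom f) m s s' : SL f s = SL f s' -> DL f m s = DL f m s'.
Proof.
move=> E; apply: (cancel_l HB) => c; have [t ->] := nd.2 c.
rewrite !nmul_suml; apply: eq_bigr => p _.
by rewrite -!nmulA !(keyL hf) E.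
Qed.
Lemma wdR (A B : nuRing) (f : A -> B) (hf : nu_rhom f) (HB : has_local_units B)
  (nd : nondegenerate_hom f) m s s' : SR f s = SR f s' -> DR f m s = DR f m s'.
Proof.
move=> E; apply: (cancel_r HB) => c; have [t ->] := nd.1 c.
rewrite !nmul_sumr; apply: eq_bigr => p _.
by rewrite !nmulA !(keyR hf) E.
Qed.

Definition repL (A B : nuRing) (f : A -> B) (nd : nondegenerate_hom f) (b : B) :=
  proj1_sig (constructive_indefinite_description _ (nd.1 b)).
Definition repR (A B : nuRing) (f : A -> B) (nd : nondegenerate_hom f) (b : B) :=
  proj1_sig (constructive_indefinite_description _ (nd.2 b)).
Lemma repL_spec (A B : nuRing) (f : A -> B) (nd : nondegenerate_hom f) b :
  b = SL f (repL nd b).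
Proof. exact: (proj2_sig (constructive_indefinite_description _ (nd.1 b))). Qed.
Lemma repR_spec (A B : nuRing) (f : A -> B) (nd : nondegenerate_hom f) b :
  b = SR f (repR nd b).
Proof. exact: (proj2_sig (constructive_indefinite_description _ (nd.2 b))). Qed.

Section C.
Variables (A B : nuRing) (f : A -> B) (hf : nu_rhom f) (HB : has_local_units B)
  (nd : nondegenerate_hom f).

Definition phiL m b := DL f m (repL nd b).
Definition phiR m b := DR f m (repR nd b).

Lemma phiL_any m b s : b = SL f s -> phiL m b = DL f m s.
Proof. by move=> E; apply: (wdL hf HB nd); rewrite -repL_spec. Qed.
Lemma phiR_any m b s : b = SR f s -> phiR m b = DR f m s.
Proof. by move=> E; apply: (wdR hf HB nd); rewrite -repR_spec. Qed.

Lemma phiL_add m x y : phiL m (x + y) = phiL m x + phiL m y.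
Proof.
rewrite (@phiL_any m _ (repL nd x ++ repL nd y)); first by rewrite /DL big_cat.
by rewrite [X in X + _](repL_spec nd x) [X in _ + X](repL_spec nd y) /SL big_cat.
Qed.
Lemma phiR_add m x y : phiR m (x + y) = phiR m x + phiR m y.
Proof.
rewrite (@phiR_any m _ (repR nd x ++ repR nd y)); first by rewrite /DR big_cat.
by rewrite [X in X + _](repR_spec nd x) [X in _ + X](repR_spec nd y) /SR big_cat.
Qed.
Lemma phiL_mul m a b : phiL m (a ** b) = phiL m a ** b.
Proof.
rewrite (@phiL_any m _ (map (fun p => (p.1, p.2 ** b)) (repL nd a))).
  by rewrite /DL /phiL big_map nmul_suml; apply: eq_bigr => p _; rewrite nmulA.
rewrite /SL big_map {1}(repL_spec nd a) /SL nmul_suml.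
by apply: eq_bigr => p _; rewrite nmulA.
Qed.
Lemma phiR_mul m a b : phiR m (a ** b) = a ** phiR m b.
Proof.
rewrite (@phiR_any m _ (map (fun p => (a ** p.1, p.2)) (repR nd b))).
  by rewrite /DR /phiR big_map nmul_sumr; apply: eq_bigr => p _; rewrite nmulA.
rewrite /SR big_map {1}(repR_spec nd b) /SR nmul_sumr.
by apply: eq_bigr => p _; rewrite nmulA.
Qed.
Lemma phiLR m a b : a ** phiL m b = phiR m a ** b.
Proof.
rewrite /phiL /phiR.
transitivity (SR f (repR nd a) ** DL f m (repL nd b)); first by rewrite -repR_spec.
transitivity (DR f m (repR nd a) ** SL f (repL nd b)); last by rewrite -repL_spec.
rewrite /SR /DR !nmul_suml; apply: eq_bigr => p _.
by rewrite -!nmulA (keyL hf).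
Qed.

Definition phi (m : multiplier A) : multiplier B :=
  @Multiplier B (phiL m) (phiR m) (phiL_add m) (phiR_add m) (phiL_mul m)
    (phiR_mul m) (phiLR m).

Lemma phi_rhom : mult_rhom phi.
Proof.
split=> m n; apply: meq; apply: functional_extensionality => b /=.
- rewrite /phiL /DL -big_split /=; apply: eq_bigr => p _.
  by rewrite hf.1 nmulDl.
- rewrite /phiR /DR -big_split /=; apply: eq_bigr => p _.
  by rewrite hf.1 nmulDr.
- rewrite (@phiL_any m _ (map (fun p => (mL n p.1, p.2)) (repL nd b))).
    by rewrite /phiL /DL big_map.
  by rewrite /phiL /SL /DL big_map.
- rewrite (@phiR_any n _ (map (fun p => (p.1, mR m p.2)) (repR nd b))).
    by rewrite /phiR /DR big_map.
  by rewrite /phiR /SR /DR big_map.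
Qed.

Lemma phi_unital : mult_unital phi.
Proof.
apply: meq; apply: functional_extensionality => b /=.
  by rewrite /phiL /DL [RHS](repL_spec nd b).
by rewrite /phiR /DR [RHS](repR_spec nd b).
Qed.

Lemma phi_ext : mult_extends f phi.
Proof.
move=> a; apply: meq; apply: functional_extensionality => b /=.
  rewrite /phiL /DL {2}(repL_spec nd b) /SL nmul_sumr; apply: eq_bigr => p _.
  by rewrite hf.2 nmulA.
rewrite /phiR /DR {2}(repR_spec nd b) /SR nmul_suml; apply: eq_bigr => p _.
by rewrite hf.2 nmulA.
Qed.

Lemma phi_cont : strictly_continuous phi.
Proof.
move=> m bs.
exists (flatten (map (fun b => map fst (repL nd b) ++ map snd (repR nd b)) bs)).
move=> m' H b bin; split => /=.
  rewrite /phiL /DL; apply: eq_big_seq => p pin.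
  have [->//] : mL m' p.1 = mL m p.1 /\ mR m' p.1 = mR m p.1.
  apply: H; apply/flatten_mapP; exists b => //.
  by rewrite mem_cat (map_f fst pin).
rewrite /phiR /DR; apply: eq_big_seq => p pin.
have [_ ->//] : mL m' p.2 = mL m p.2 /\ mR m' p.2 = mR m p.2.
apply: H; apply/flatten_mapP; exists b => //.
by rewrite mem_cat (map_f snd pin) orbT.
Qed.
End C.

Lemma right_unit_list (A : nuRing) (HA : has_local_units A) (l : seq A) :
  exists e : A, forall a, a \in l -> a ** e = a.
Proof.
elim: l => [|a l [E HE]]; first by exists 0.
have [e2 [_ [He2 _]]] := HA (a - a ** E).
have key : forall x : A, x ** (E + (e2 - E ** e2)) = x ** E + (x - x ** E) ** e2.
  by move=> x; rewrite nmulDr nmulrB nmulBl nmulA.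
exists (E + (e2 - E ** e2)) => x; rewrite in_cons => /orP [/eqP -> | xl].
  by rewrite key He2 addrC subrK.
by rewrite key HE // subrr nmul0r addr0.
Qed.
Lemma left_unit_list (A : nuRing) (HA : has_local_units A) (l : seq A) :
  exists e : A, forall a, a \in l -> e ** a = a.
Proof.
elim: l => [|a l [E HE]]; first by exists 0.
have [_ [e2 [_ He2]]] := HA (a - E ** a).
have key : forall x : A, (E + (e2 - e2 ** E)) ** x = E ** x + e2 ** (x - E ** x).
  by move=> x; rewrite nmulDl nmulBl nmulrB nmulA.
exists (E + (e2 - e2 ** E)) => x; rewrite in_cons => /orP [/eqP -> | xl].
  by rewrite key He2 addrC subrK.
by rewrite key HE // subrr nmulr0 addr0.
Qed.
Lemma unit_list (A : nuRing) (HA : has_local_units A) (l : seq A) :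
  exists u : A, forall a, a \in l -> u ** a = a /\ a ** u = a.
Proof.
have [E HE] := right_unit_list HA l; have [E' HE'] := left_unit_list HA l.
exists (E + (E' - E ** E')) => a al; split.
  by rewrite nmulDl nmulBl -nmulA HE' // addrC subrK.
by rewrite nmulDr nmulrB nmulA HE // subrr addr0.
Qed.

Lemma mmul_mu_r (A : nuRing) (m : multiplier A) a : mmul m (mu a) = mu (mL m a).
Proof.
apply: meq; apply: functional_extensionality => x /=; first by rewrite mL_mul.
by rewrite mLR.
Qed.
Lemma mmul_mu_l (A : nuRing) (m : multiplier A) a : mmul (mu a) m = mu (mR m a).
Proof.
apply: meq; apply: functional_extensionality => x /=; first by rewrite mLR.
by rewrite mR_mul.
Qed.

Lemma ext_L (A B : nuRing) (f : A -> B) phi : mult_rhom phi -> mult_extends f phi ->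
  forall m a c, mL (phi m) (f a ** c) = f (mL m a) ** c.
Proof.
move=> [_ Hm] He m a c.
change (mL (mmul (phi m) (mu (f a))) c = f (mL m a) ** c).
by rewrite -He -Hm mmul_mu_r He.
Qed.
Lemma ext_R (A B : nuRing) (f : A -> B) phi : mult_rhom phi -> mult_extends f phi ->
  forall m a c, mR (phi m) (c ** f a) = c ** f (mR m a).
Proof.
move=> [_ Hm] He m a c.
change (mR (mmul (mu (f a)) (phi m)) c = c ** f (mR m a)).
by rewrite -He -Hm mmul_mu_l He.
Qed.

Theorem mainTheorem11 (A B : nuRing) (f : A -> B) :
  has_local_units A -> has_local_units B -> nu_rhom f ->
  (nondegenerate_hom f <->
   exists phi : multiplier A -> multiplier B,
     mult_rhom phi /\ mult_unital phi /\ strictly_continuous phi /\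
     mult_extends f phi) /\
  (nondegenerate_hom f ->
   forall phi psi : multiplier A -> multiplier B,
     mult_rhom phi -> mult_extends f phi ->
     mult_rhom psi -> mult_extends f psi -> phi = psi).
Proof.
move=> HA HB hf; split; first split.
- move=> nd; exists (phi hf HB nd); split; first exact: phi_rhom.
  split; first exact: phi_unital.
  split; first exact: phi_cont.
  exact: phi_ext.
- case=> ph [Hh [Hu [Hc He]]].
  have key : forall b : B, exists u : A, f u ** b = b /\ b ** f u = b.
    move=> b; have [as_ Has] := Hc (mone A) [:: b].
    have [u Hu'] := unit_list HA as_.
    exists u.
    have [h1 h2] := Has (mu u) (fun a ain => Hu' a ain) b (mem_head _ _).
    by rewrite He Hu /= in h1 h2.
  split=> b; have [u [h1 h2]] := key b.
    by exists [:: (u, b)]; rewrite big_cons big_nil addr0.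
  by exists [:: (b, u)]; rewrite big_cons big_nil addr0.
- move=> nd ph ps Hp Ep Hs Es.
  apply: functional_extensionality => m; apply: meq;
    apply: functional_extensionality => b.
    have [s ->] := nd.1 b.
    rewrite !mL_sum; apply: eq_bigr => p _.
    by rewrite (ext_L Hp Ep) (ext_L Hs Es).
  have [s ->] := nd.2 b.
  rewrite !mR_sum; apply: eq_bigr => p _.
  by rewrite (ext_R Hp Ep) (ext_R Hs Es).
Qed.
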